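(* Let $g=2G\,du\,(dv+v\beta_A dx^A)+\mu_{AB}dx^Adx^B$ be a metric in Rácz–Wald coordinates $\{u,v,x^A\}$, where $G$ is a nowhere vanishing function, $\boldsymbol\beta=\beta_Adx^A$ a one-form and $\mu_{AB}$ a Riemannian metric on the codimension-two surfaces $\{u,v=\text{const}\}$, all depending only on $(s=uv,x^A)$. Assume the Killing vector $\eta=u\partial_u-v\partial_v$ is integrable with respect to $g$, i.e. $\boldsymbol\eta\wedge d\boldsymbol\eta=0$ for $\boldsymbol\eta=g(\eta,\cdot)$. Then $\boldsymbol\beta$ is closed, and hence locally exact. *)

(* Defs.v *)
From HB Require Import structures.
From mathcomp Require Import all_boot all_order all_algebra.
From mathcomp Require Import all_classical all_reals all_analysis.
Set Implicit Arguments. Unset Strict Implicit. Unset Printing Implicit Defensive.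
Import Order.TTheory GRing.Theory Num.Theory.
Import numFieldNormedType.Exports.
Local Open Scope classical_set_scope.
Local Open Scope ring_scope.

(* Spacetime points p : 'rV[R]_(n.+2) with coordinates
   index 0 = u, index 1 = v, index (2 + A) = x^A  (A : 'I_n).
   Functions on the "orbit space" take q : 'rV[R]_(n.+1) with
   index 0 = s = u v and index (1 + A) = x^A. *)

Definition pu {R : realType} {n : nat} (p : 'rV[R]_(n.+2)) : R := p ord0 ord0.
Definition pv {R : realType} {n : nat} (p : 'rV[R]_(n.+2)) : R :=
  p ord0 (lift ord0 ord0).
Definition px {R : realType} {n : nat} (p : 'rV[R]_(n.+2)) : 'rV[R]_n :=
  \row_(k < n) p ord0 (rshift 2 k).

Definition sx {R : realType} {n : nat} (p : 'rV[R]_(n.+2)) : 'rV[R]_(n.+1) :=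
  \row_(j < n.+1) (if unlift ord0 j is Some k then px p ord0 k
                   else pu p * pv p).

Definition dpart {R : realType} {m : nat} (i : 'I_m) (f : 'rV[R]_m -> R)
  (p : 'rV[R]_m) : R := derive f p (delta_mx ord0 i).

Definition C1_on {R : realType} {m : nat} (D : set 'rV[R]_m)
  (f : 'rV[R]_m -> R) : Prop :=
  forall q, D q -> differentiable f q /\
    forall j : 'I_m, {for q, continuous (dpart j f)}.

(* Components g_{ij} of  g = 2G du (dv + v beta_A dx^A) + mu_AB dx^A dx^B
   (symmetrized products). *)
Definition gRW {R : realType} {n : nat} (G : 'rV[R]_(n.+1) -> R)
  (beta : 'I_n -> 'rV[R]_(n.+1) -> R) (mu : 'I_n -> 'I_n -> 'rV[R]_(n.+1) -> R)
  (i j : 'I_(n.+2)) (p : 'rV[R]_(n.+2)) : R :=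
  match @fintype.split 2 n i, @fintype.split 2 n j with
  | inl a, inl b => if (a : nat) != b then G (sx p) else 0
  | inl a, inr B => if (a : nat) == 0%N then G (sx p) * pv p * beta B (sx p) else 0
  | inr A, inl b => if (b : nat) == 0%N then G (sx p) * pv p * beta A (sx p) else 0
  | inr A, inr B => mu A B (sx p)
  end.

Definition etaRW {R : realType} {n : nat} (i : 'I_(n.+2)) (p : 'rV[R]_(n.+2)) : R :=
  match @fintype.split 2 n i with
  | inl a => if (a : nat) == 0%N then pu p else - pv p
  | inr _ => 0
  end.

Definition etaflat {R : realType} {n : nat} (G : 'rV[R]_(n.+1) -> R)
  (beta : 'I_n -> 'rV[R]_(n.+1) -> R) (mu : 'I_n -> 'I_n -> 'rV[R]_(n.+1) -> R)
  (i : 'I_(n.+2)) (p : 'rV[R]_(n.+2)) : R :=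
  \sum_(j < n.+2) etaRW j p * gRW G beta mu j i p.

Definition betaST {R : realType} {n : nat} (beta : 'I_n -> 'rV[R]_(n.+1) -> R)
  (i : 'I_(n.+2)) (p : 'rV[R]_(n.+2)) : R :=
  match @fintype.split 2 n i with
  | inl _ => 0
  | inr A => beta A (sx p)
  end.

(* w /\ dw = 0 on W, written in components (w /\ dw)_{ijk} = 0 *)
Definition integrable_on {R : realType} {m : nat} (W : set 'rV[R]_m)
  (w : 'I_m -> 'rV[R]_m -> R) : Prop :=
  forall p, W p -> forall i j k : 'I_m,
    w i p * (dpart j (w k) p - dpart k (w j) p)
  + w j p * (dpart k (w i) p - dpart i (w k) p)
  + w k p * (dpart i (w j) p - dpart j (w i) p) = 0.

Definition closed_on {R : realType} {m : nat} (W : set 'rV[R]_m)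
  (w : 'I_m -> 'rV[R]_m -> R) : Prop :=
  forall p, W p -> forall i j : 'I_m, dpart i (w j) p = dpart j (w i) p.

(* Main.v *)
Require Import Defs.
From HB Require Import structures.
From mathcomp Require Import all_boot all_order all_algebra.
From mathcomp Require Import all_classical all_reals all_analysis.
From mathcomp Require Import ring lra.
Import Order.TTheory GRing.Theory Num.Theory.
Import numFieldNormedType.Exports.
Local Open Scope classical_set_scope.
Local Open Scope ring_scope.
Set Implicit Arguments. Unset Strict Implicit. Unset Printing Implicit Defensive.

Lemma split_i0 n : @fintype.split 2 n ord0 = inl ord0.
Proof.
have -> : (ord0 : 'I_(2+n)) = lshift n (ord0 : 'I_2) by apply: val_inj.
exact: (unsplitK (inl _)).
Qed.
Lemma split_i1 n : @fintype.split 2 n (lift ord0 ord0) = inl (lift ord0 ord0).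
Proof.
have -> : (lift ord0 ord0 : 'I_(2+n)) = lshift n (lift ord0 ord0 : 'I_2) by apply: val_inj.
exact: (unsplitK (inl _)).
Qed.
Lemma split_rA n (A : 'I_n) : @fintype.split 2 n (rshift 2 A) = inr A.
Proof. exact: (unsplitK (inr _)). Qed.

Lemma sx0 (R : realType) n (p : 'rV[R]_(n.+2)) : sx p ord0 ord0 = pu p * pv p.
Proof. by rewrite /sx mxE unlift_none. Qed.
Lemma sxA (R : realType) n (p : 'rV[R]_(n.+2)) A : sx p ord0 (lift ord0 A) = p ord0 (rshift 2 A).
Proof. by rewrite /sx mxE liftK /px mxE. Qed.

Lemma deltaE (R : realType) m (i j : 'I_m) : (delta_mx ord0 i : 'rV[R]_m) ord0 j = (j == i)%:R.
Proof. by rewrite mxE eqxx. Qed.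


Lemma sx_line0 (R : realType) n (p : 'rV[R]_(n.+2)) h :
  sx (h *: delta_mx ord0 ord0 + p) = h *: (pv p *: delta_mx ord0 ord0) + sx p.
Proof.
apply/rowP => k; rewrite !mxE.
by case: (unliftP ord0 k) => [k'|] Hk; rewrite ?Hk /pu /pv /px !mxE /= ?eqxx; ring.
Qed.
Lemma sx_line1 (R : realType) n (p : 'rV[R]_(n.+2)) h :
  sx (h *: delta_mx ord0 (lift ord0 ord0) + p) = h *: (pu p *: delta_mx ord0 ord0) + sx p.
Proof.
apply/rowP => k; rewrite !mxE.
by case: (unliftP ord0 k) => [k'|] Hk; rewrite ?Hk /pu /pv /px !mxE /= ?eqxx; ring.
Qed.
Lemma sx_lineA (R : realType) n (p : 'rV[R]_(n.+2)) (B : 'I_n) h :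
  sx (h *: delta_mx ord0 (rshift 2 B) + p) = h *: delta_mx ord0 (lift ord0 B) + sx p.
Proof.
apply/rowP => k; rewrite !mxE.
case: (unliftP ord0 k) => [k'|] Hk; rewrite ?Hk /pu /pv /px !mxE /= ?eqxx; last by ring.
rewrite (inj_eq (@lift_inj _ ord0)).
have -> : (rshift 2 k' == rshift 2 B :> 'I_(2+n)) = (k' == B) by rewrite (inj_eq (@rshift_inj 2 n)).
ring.
Qed.

Lemma pu_line (R : realType) n (p : 'rV[R]_(n.+2)) j h :
  pu (h *: delta_mx ord0 j + p) = h * (ord0 == j)%:R + pu p.
Proof. by rewrite /pu !mxE. Qed.
Lemma pv_line (R : realType) n (p : 'rV[R]_(n.+2)) j h :
  pv (h *: delta_mx ord0 j + p) = h * (lift ord0 ord0 == j)%:R + pv p.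
Proof. by rewrite /pv !mxE. Qed.

Lemma transfer (R : realType) m1 m2 (F : 'rV[R]_m1 -> R) (f : 'rV[R]_m2 -> R) p e q d :
 (forall h, F (h *: e + p) = f (h *: d + q)) ->
 derive F p e = derive f q d /\ (derivable f q d -> derivable F p e).
Proof.
move=> H.
have E : (fun h : R => h^-1 *: ((F \o shift p) (h *: e) - F p)) =
         (fun h : R => h^-1 *: ((f \o shift q) (h *: d) - f q)).
  apply/funext => h /=. rewrite H. have := H 0. rewrite !scale0r !add0r => ->. done.
by rewrite /derive /derivable E; split.
Qed.

Lemma derive_affine (R : realType) m (F : 'rV[R]_m -> R) p e c :
  (forall h, F (h *: e + p) = h * c + F p) -> derivable F p e /\ derive F p e = c.
Proof.
move=> H.
have E : \forall h \near 0^', h^-1 *: ((F \o shift p) (h *: e) - F p) = c.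
  near=> h. rewrite /= H addrK.
  have hn0 : h != 0 by near: h; exact: nbhs_dnbhs_neq.
  by rewrite /GRing.scale /= mulrA mulVf // mul1r.
split; first exact: (is_cvg_near_cst c).
exact: (lim_near_cst _ E).
Unshelve. all: by end_near.
Qed.

Lemma dcomp (R : realType) n (Phi : 'rV[R]_(n.+1) -> R) (p : 'rV[R]_(n.+2)) e d :
  differentiable Phi (sx p) -> (forall h, sx (h *: e + p) = h *: d + sx p) ->
  derivable (fun x => Phi (sx x)) p e /\
  derive (fun x => Phi (sx x)) p e = derive Phi (sx p) d.
Proof.
move=> dP H.
have [E1 E2] := @transfer R _ _ (fun x => Phi (sx x)) Phi p e (sx p) d (fun h => congr1 Phi (H h)).
by split => //; apply: E2; exact: diff_derivable.
Qed.

Lemma deriveZdir (R : realType) m (Phi : 'rV[R]_m -> R) q c d :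
  differentiable Phi q -> derive Phi q (c *: d) = c * derive Phi q d.
Proof. by move=> dP; rewrite !deriveE // linearZ. Qed.

Lemma dM (R : realType) m (F1 F2 : 'rV[R]_m -> R) p e :
  derivable F1 p e -> derivable F2 p e ->
  derivable (fun x => F1 x * F2 x) p e /\
  derive (fun x => F1 x * F2 x) p e = F1 p * derive F2 p e + F2 p * derive F1 p e.
Proof. by move=> d1 d2; split; [exact: derivableM | exact: deriveM]. Qed.

Lemma dN (R : realType) m (F1 : 'rV[R]_m -> R) p e :
  derivable F1 p e ->
  derivable (fun x => - F1 x) p e /\ derive (fun x => - F1 x) p e = - derive F1 p e.
Proof. by move=> d1; split; [exact: derivableN | exact: deriveN]. Qed.

Lemma liftlift n (j : 'I_n) : lift ord0 (lift ord0 j) = rshift 2 j :> 'I_(n.+2).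
Proof. by apply: val_inj. Qed.

Lemma etaflat_sum (R : realType) n G beta mu (i : 'I_(n.+2)) (p : 'rV[R]_(n.+2)) :
  etaflat G beta mu i p = pu p * gRW G beta mu ord0 i p - pv p * gRW G beta mu (lift ord0 ord0) i p.
Proof.
rewrite /etaflat !big_ord_recl big1 => [|j _]; last first.
  by rewrite liftlift /etaRW split_rA mul0r.
by rewrite /etaRW split_i0 split_i1 /= addr0 mulNr.
Qed.

Lemma eta0 (R : realType) n G beta mu :
  @etaflat R n G beta mu ord0 = fun x => - (pv x * G (sx x)).
Proof.
apply/funext => x; rewrite etaflat_sum /gRW split_i0 split_i1 /=. ring.
Qed.
Lemma eta1 (R : realType) n G beta mu :
  @etaflat R n G beta mu (lift ord0 ord0) = fun x => pu x * G (sx x).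
Proof.
apply/funext => x; rewrite etaflat_sum /gRW split_i0 split_i1 /=. ring.
Qed.
Lemma etaA (R : realType) n G beta mu A :
  @etaflat R n G beta mu (rshift 2 A) = fun x => pu x * pv x * (G (sx x) * beta A (sx x)).
Proof.
apply/funext => x; rewrite etaflat_sum /gRW split_i0 split_i1 split_rA /=. ring.
Qed.

Lemma Dw0 (R : realType) n (G : 'rV[R]_(n.+1) -> R) (p : 'rV[R]_(n.+2)) e cv dG :
  derivable pv p e -> derive pv p e = cv ->
  derivable (fun x => G (sx x)) p e -> derive (fun x => G (sx x)) p e = dG ->
  derive (fun x => - (pv x * G (sx x))) p e = - (pv p * dG + G (sx p) * cv).
Proof.
move=> d1 e1 d2 e2.
have [dm em] := dM d1 d2.
by rewrite (dN dm).2 em e1 e2.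
Qed.

Lemma Dw1 (R : realType) n (G : 'rV[R]_(n.+1) -> R) (p : 'rV[R]_(n.+2)) e cu dG :
  derivable pu p e -> derive pu p e = cu ->
  derivable (fun x => G (sx x)) p e -> derive (fun x => G (sx x)) p e = dG ->
  derive (fun x => pu x * G (sx x)) p e = pu p * dG + G (sx p) * cu.
Proof.
move=> d1 e1 d2 e2.
by rewrite (dM d1 d2).2 e1 e2.
Qed.

Lemma DwA (R : realType) n (G b : 'rV[R]_(n.+1) -> R) (p : 'rV[R]_(n.+2)) e cu cv dG db :
  derivable pu p e -> derive pu p e = cu ->
  derivable pv p e -> derive pv p e = cv ->
  derivable (fun x => G (sx x)) p e -> derive (fun x => G (sx x)) p e = dG ->
  derivable (fun x => b (sx x)) p e -> derive (fun x => b (sx x)) p e = db ->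
  derive (fun x => pu x * pv x * (G (sx x) * b (sx x))) p e =
  pu p * pv p * (G (sx p) * db + b (sx p) * dG) + G (sx p) * b (sx p) * (pu p * cv + pv p * cu).
Proof.
move=> d1 e1 d2 e2 d3 e3 d4 e4.
have [d12 e12] := dM d1 d2.
have [d34 e34] := dM d3 d4.
by rewrite (dM d12 d34).2 e12 e34 e1 e2 e3 e4.
Qed.

Lemma step1 (R : realType) n G beta mu (p : 'rV[R]_(n.+2)) :
  pu p != 0 -> pv p != 0 -> G (sx p) != 0 -> differentiable G (sx p) ->
  (forall A, differentiable (beta A) (sx p)) ->
  (forall i j k : 'I_(n.+2),
    let w := @etaflat R n G beta mu in
    w i p * (dpart j (w k) p - dpart k (w j) p)
  + w j p * (dpart k (w i) p - dpart i (w k) p)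
  + w k p * (dpart i (w j) p - dpart j (w i) p) = 0) ->
  forall A, dpart ord0 (beta A) (sx p) = 0 /\
    forall B, dpart (lift ord0 B) (beta A) (sx p) = dpart (lift ord0 A) (beta B) (sx p).
Proof.
move=> u0 v0 G0 dG dB Hint.
set q := sx p.
have du j : derivable (@pu R n) p (delta_mx ord0 j) /\ derive (@pu R n) p (delta_mx ord0 j) = (ord0 == j)%:R.
  exact: derive_affine (pu_line p j).
have dv j : derivable (@pv R n) p (delta_mx ord0 j) /\ derive (@pv R n) p (delta_mx ord0 j) = (lift ord0 ord0 == j)%:R.
  exact: derive_affine (pv_line p j).
have c0 (Phi : 'rV[R]_(n.+1) -> R) : differentiable Phi q ->
   derivable (fun x => Phi (sx x)) p (delta_mx ord0 ord0) /\
   derive (fun x => Phi (sx x)) p (delta_mx ord0 ord0) = pv p * dpart ord0 Phi q.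
  move=> dP; have [d1 e1] := dcomp dP (sx_line0 p).
  by split => //; rewrite e1 deriveZdir.
have c1 (Phi : 'rV[R]_(n.+1) -> R) : differentiable Phi q ->
   derivable (fun x => Phi (sx x)) p (delta_mx ord0 (lift ord0 ord0)) /\
   derive (fun x => Phi (sx x)) p (delta_mx ord0 (lift ord0 ord0)) = pu p * dpart ord0 Phi q.
  move=> dP; have [d1 e1] := dcomp dP (sx_line1 p).
  by split => //; rewrite e1 deriveZdir.
have cB (Phi : 'rV[R]_(n.+1) -> R) B : differentiable Phi q ->
   derivable (fun x => Phi (sx x)) p (delta_mx ord0 (rshift 2 B)) /\
   derive (fun x => Phi (sx x)) p (delta_mx ord0 (rshift 2 B)) = dpart (lift ord0 B) Phi q.
  move=> dP; have [d1 e1] := dcomp dP (sx_lineA p B).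
  by split.
have dWA j A cu cv dGv db :
  derive (@pu R n) p (delta_mx ord0 j) = cu ->
  derive (@pv R n) p (delta_mx ord0 j) = cv ->
  derivable (fun x => G (sx x)) p (delta_mx ord0 j) -> derive (fun x => G (sx x)) p (delta_mx ord0 j) = dGv ->
  derivable (fun x => beta A (sx x)) p (delta_mx ord0 j) -> derive (fun x => beta A (sx x)) p (delta_mx ord0 j) = db ->
  dpart j (etaflat G beta mu (rshift 2 A)) p =
  pu p * pv p * (G q * db + beta A q * dGv) + G q * beta A q * (pu p * cv + pv p * cu).
  move=> e1 e2 d3 e3 d4 e4; rewrite etaA /dpart.
  exact: DwA (du j).1 e1 (dv j).1 e2 d3 e3 d4 e4.
have dW0 j cv dGv :
  derive (@pv R n) p (delta_mx ord0 j) = cv ->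
  derivable (fun x => G (sx x)) p (delta_mx ord0 j) -> derive (fun x => G (sx x)) p (delta_mx ord0 j) = dGv ->
  dpart j (etaflat G beta mu ord0) p = - (pv p * dGv + G q * cv).
  move=> e2 d3 e3; rewrite eta0 /dpart.
  exact: Dw0 (dv j).1 e2 d3 e3.
have dW1 j cu dGv :
  derive (@pu R n) p (delta_mx ord0 j) = cu ->
  derivable (fun x => G (sx x)) p (delta_mx ord0 j) -> derive (fun x => G (sx x)) p (delta_mx ord0 j) = dGv ->
  dpart j (etaflat G beta mu (lift ord0 ord0)) p = pu p * dGv + G q * cu.
  move=> e2 d3 e3; rewrite eta1 /dpart.
  exact: Dw1 (du j).1 e2 d3 e3.
have u00 : derive (@pu R n) p (delta_mx ord0 ord0) = 1 by rewrite (du _).2 eqxx.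
have u01 : derive (@pu R n) p (delta_mx ord0 (lift ord0 ord0)) = 0 by rewrite (du _).2.
have u0B B : derive (@pu R n) p (delta_mx ord0 (rshift 2 B)) = 0 by rewrite (du _).2.
have v00 : derive (@pv R n) p (delta_mx ord0 ord0) = 0 by rewrite (dv _).2.
have v01 : derive (@pv R n) p (delta_mx ord0 (lift ord0 ord0)) = 1 by rewrite (dv _).2 eqxx.
have v0B B : derive (@pv R n) p (delta_mx ord0 (rshift 2 B)) = 0 by rewrite (dv _).2.
have K1 A : dpart ord0 (beta A) q = 0.
  have H := Hint ord0 (lift ord0 ord0) (rshift 2 A); rewrite /= in H.
  rewrite (dWA _ _ _ _ _ _ u01 v01 (c1 G dG).1 (c1 G dG).2 (c1 _ (dB A)).1 (c1 _ (dB A)).2) in H.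
  rewrite (dWA _ _ _ _ _ _ u00 v00 (c0 G dG).1 (c0 G dG).2 (c0 _ (dB A)).1 (c0 _ (dB A)).2) in H.
  rewrite (dW1 _ _ _ (u0B A) (cB G A dG).1 (cB G A dG).2) in H.
  rewrite (dW1 _ _ _ u00 (c0 G dG).1 (c0 G dG).2) in H.
  rewrite (dW0 _ _ _ (v0B A) (cB G A dG).1 (cB G A dG).2) in H.
  rewrite (dW0 _ _ _ v01 (c1 G dG).1 (c1 G dG).2) in H.
  rewrite eta0 eta1 etaA -/q in H.
  set K := -2 * (pu p * pv p) ^+ 2 * G q ^+ 2.
  have K0 : K != 0.
    by rewrite /K !mulf_neq0 ?expf_neq0 // oppr_eq0 pnatr_eq0.
  apply: (mulfI K0); rewrite mulr0 -[RHS]H /K; ring.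
split; first exact: K1.
move=> B.
have H := Hint ord0 (rshift 2 A) (rshift 2 B); rewrite /= in H.
rewrite (dWA _ _ _ _ _ _ (u0B A) (v0B A) (cB G A dG).1 (cB G A dG).2 (cB _ A (dB B)).1 (cB _ A (dB B)).2) in H.
rewrite (dWA _ _ _ _ _ _ (u0B B) (v0B B) (cB G B dG).1 (cB G B dG).2 (cB _ B (dB A)).1 (cB _ B (dB A)).2) in H.
rewrite (dWA _ _ _ _ _ _ u00 v00 (c0 G dG).1 (c0 G dG).2 (c0 _ (dB A)).1 (c0 _ (dB A)).2) in H.
rewrite (dWA _ _ _ _ _ _ u00 v00 (c0 G dG).1 (c0 G dG).2 (c0 _ (dB B)).1 (c0 _ (dB B)).2) in H.
rewrite (dW0 _ _ _ (v0B A) (cB G A dG).1 (cB G A dG).2) in H.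
rewrite (dW0 _ _ _ (v0B B) (cB G B dG).1 (cB G B dG).2) in H.
rewrite eta0 !etaA -/q !K1 in H.
set K := (pu p * pv p) * pv p * G q ^+ 2.
have K0 : K != 0.
  by rewrite /K !mulf_neq0 ?expf_neq0.
apply/eqP; rewrite -subr_eq0; apply/eqP.
apply: (mulfI K0); rewrite mulr0 -[RHS]H /K; ring.
Qed.

Lemma line_cont (R : realType) m (d q : 'rV[R]_m) : {for 0, continuous (fun h : R => h *: d + q)}.
Proof.
apply: (@continuousD _ _ _ (fun h : R => h *: d) (fun=> q)).
  by apply: continuousZr_tmp; exact: cvg_id.
exact: cvg_cst.
Qed.

Lemma lim_zero (R : realType) m (psi : 'rV[R]_m -> R) q d :
  {for q, continuous psi} -> (\forall h \near 0^', psi (h *: d + q) = 0) -> psi q = 0.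
Proof.
move=> cpsi Hn.
have c : {for 0, continuous (psi \o (fun h : R => h *: d + q))}.
  apply: continuous_comp; first exact: line_cont.
  by rewrite /= scale0r add0r.
move/continuous_withinNx: c; rewrite /= scale0r add0r => c.
by rewrite -(cvg_lim _ c) //; exact: lim_near_cst.
Qed.

Lemma W_line (R : realType) m (W : set 'rV[R]_m) (p e : 'rV[R]_m) :
  open W -> W p -> \forall h \near 0^', W (h *: e + p) /\ h != 0.
Proof.
move=> oW Wp.
have c := @line_cont _ _ e p.
have nW : nbhs p W by apply: open_nbhs_nbhs; split.
have : nbhs (0 : R) (fun h => W (h *: e + p)).
  by apply: c; rewrite /= scale0r add0r.
move=> H0.
have H1 : \forall h \near 0^', W (h *: e + p).
  by rewrite near_withinE; apply: filterS H0 => h Wh _.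
have H2 := nbhs_dnbhs_neq (0 : R).
near=> h; split; [near: h; exact: H1 | near: h; exact: H2].
Unshelve. all: by end_near.
Qed.

Definition Kprop (R : realType) n (beta : 'I_n -> 'rV[R]_(n.+1) -> R) q :=
  forall A, dpart ord0 (beta A) q = 0 /\
    forall B, dpart (lift ord0 B) (beta A) q = dpart (lift ord0 A) (beta B) q.

Lemma Kprop_lim (R : realType) n (beta : 'I_n -> 'rV[R]_(n.+1) -> R) q d :
  (forall A j, {for q, continuous (dpart j (beta A))}) ->
  (\forall h \near 0^', Kprop beta (h *: d + q)) -> Kprop beta q.
Proof.
move=> cont HK A; split.
  apply: (@lim_zero _ _ _ q d (cont A ord0)).
  by apply: filterS HK => h /(_ A) [].
move=> B; apply/eqP; rewrite -subr_eq0; apply/eqP.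
apply: (@lim_zero _ _ (fun y => dpart (lift ord0 B) (beta A) y - dpart (lift ord0 A) (beta B) y) q d).
  exact: continuousB.
apply: filterS HK => h /(_ A) [_ /(_ B) ->]; exact: subrr.
Qed.

Lemma ord_cases n (i : 'I_(n.+2)) :
  i = ord0 \/ i = lift ord0 ord0 \/ exists B, i = rshift 2 B.
Proof.
case: (unliftP ord0 i) => [i'|] ->; last by left.
case: (unliftP ord0 i') => [i''|] ->; last by right; left.
by right; right; exists i''; apply: val_inj.
Qed.

Lemma betaST0 (R : realType) n (beta : 'I_n -> 'rV[R]_(n.+1) -> R) :
  betaST beta ord0 = fun _ => 0.
Proof. by apply/funext => x; rewrite /betaST split_i0. Qed.
Lemma betaST1 (R : realType) n (beta : 'I_n -> 'rV[R]_(n.+1) -> R) :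
  betaST beta (lift ord0 ord0) = fun _ => 0.
Proof. by apply/funext => x; rewrite /betaST split_i1. Qed.
Lemma betaSTA (R : realType) n (beta : 'I_n -> 'rV[R]_(n.+1) -> R) A :
  betaST beta (rshift 2 A) = fun x => beta A (sx x).
Proof. by apply/funext => x; rewrite /betaST split_rA. Qed.

Lemma dpart_cst0 (R : realType) m (j : 'I_m) (p : 'rV[R]_m) : dpart j (fun _ => 0) p = 0.
Proof. exact: derive_cst. Qed.

Lemma dsx0 (R : realType) n (Phi : 'rV[R]_(n.+1) -> R) (p : 'rV[R]_(n.+2)) :
  differentiable Phi (sx p) ->
  dpart ord0 (fun x => Phi (sx x)) p = pv p * dpart ord0 Phi (sx p).
Proof. by move=> dP; rewrite /dpart (dcomp dP (sx_line0 p)).2 deriveZdir. Qed.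
Lemma dsx1 (R : realType) n (Phi : 'rV[R]_(n.+1) -> R) (p : 'rV[R]_(n.+2)) :
  differentiable Phi (sx p) ->
  dpart (lift ord0 ord0) (fun x => Phi (sx x)) p = pu p * dpart ord0 Phi (sx p).
Proof. by move=> dP; rewrite /dpart (dcomp dP (sx_line1 p)).2 deriveZdir. Qed.
Lemma dsxB (R : realType) n (Phi : 'rV[R]_(n.+1) -> R) (p : 'rV[R]_(n.+2)) B :
  differentiable Phi (sx p) ->
  dpart (rshift 2 B) (fun x => Phi (sx x)) p = dpart (lift ord0 B) Phi (sx p).
Proof. by move=> dP; rewrite /dpart (dcomp dP (sx_lineA p B)).2. Qed.

Theorem mainTheorem5 (R : realType) (n : nat)
  (D : set 'rV[R]_(n.+1)) (W : set 'rV[R]_(n.+2))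
  (G : 'rV[R]_(n.+1) -> R) (beta : 'I_n -> 'rV[R]_(n.+1) -> R)
  (mu : 'I_n -> 'I_n -> 'rV[R]_(n.+1) -> R) :
  open D -> open W -> (forall p, W p -> D (sx p)) ->
  C1_on D G -> (forall A, C1_on D (beta A)) ->
  (forall A B, C1_on D (mu A B)) ->
  (forall q, D q -> G q != 0) ->
  (forall q, D q -> forall A B, mu A B q = mu B A q) ->
  (forall q, D q -> forall xi : 'rV[R]_n, xi != 0 ->
       0 < \sum_(A < n) \sum_(B < n) xi ord0 A * mu A B q * xi ord0 B) ->
  integrable_on W (etaflat G beta mu) ->
  closed_on W (betaST beta).
Proof.
move=> oD oW WD CG CB Cmu G0 musym mupos Hint.
have gen p : W p -> pu p != 0 -> pv p != 0 -> Kprop beta (sx p).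
  move=> Wp u0 v0; have Dq := WD p Wp.
  apply: (@step1 R n G beta mu p u0 v0 (G0 _ Dq) (CG _ Dq).1 (fun A => (CB A _ Dq).1)).
  move=> i j k; exact: Hint p Wp i j k.
have cont q : D q -> forall A j, {for q, continuous (dpart j (beta A))}.
  by move=> Dq A j; exact: (CB A q Dq).2 j.
have st2 p : W p -> pv p != 0 -> Kprop beta (sx p).
  move=> Wp v0; have [u0|u0] := eqVneq (pu p) 0; last exact: gen.
  apply: (@Kprop_lim _ _ beta (sx p) (pv p *: delta_mx ord0 ord0) (cont _ (WD _ Wp))).
  apply: filterS (@W_line _ _ W p (delta_mx ord0 ord0) oW Wp) => h [Wh hn0].
  rewrite -sx_line0; apply: gen Wh _ _.
    by rewrite pu_line u0 eqxx addr0 mulr1.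
  by rewrite pv_line /= mulr0 add0r.
have st3 p : W p -> pu p != 0 -> Kprop beta (sx p).
  move=> Wp u0; have [v0|v0] := eqVneq (pv p) 0; last exact: gen.
  apply: (@Kprop_lim _ _ beta (sx p) (pu p *: delta_mx ord0 ord0) (cont _ (WD _ Wp))).
  apply: filterS (@W_line _ _ W p (delta_mx ord0 (lift ord0 ord0)) oW Wp) => h [Wh hn0].
  rewrite -sx_line1; apply: gen Wh _ _.
    by rewrite pu_line /= mulr0 add0r.
  by rewrite pv_line v0 eqxx addr0 mulr1.
have Kall p : W p -> Kprop beta (sx p).
  move=> Wp; have [v0|v0] := eqVneq (pv p) 0; last exact: st2.
  have [u0|u0] := eqVneq (pu p) 0; last exact: st3.
  have [h [Wh hn0]] := filter_ex (@W_line _ _ W p (delta_mx ord0 (lift ord0 ord0)) oW Wp).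
  have E : sx (h *: delta_mx ord0 (lift ord0 ord0) + p) = sx p.
    by rewrite sx_line1 u0 scale0r scaler0 add0r.
  rewrite -E; apply: st2 Wh _.
  by rewrite pv_line v0 eqxx addr0 mulr1.
move=> p Wp i j.
have K := Kall p Wp.
have dB A : differentiable (beta A) (sx p) by exact: (CB A _ (WD _ Wp)).1.
case: (ord_cases i) => [->|[->|[A ->]]]; case: (ord_cases j) => [->|[->|[B ->]]];
  rewrite ?betaST0 ?betaST1 ?betaSTA ?dpart_cst0 ?dsx0 ?dsx1 ?dsxB ?(K _).1 ?mulr0 //.
exact: esym ((K A).2 B).
Qed.
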